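(* Suppose $p_{\max}\cdot d_{\max}<1$. Then there exist constants $R,\rho>0$ (depending only on $p_{\max}$ and $d_{\max}$) such that for any $L>0$, for every round $t$ of the adaptive seeding process (under any seeding rule and any prior history), the probability that the number of nodes newly activated in round $t$ exceeds $L$ is at most $Re^{-\rho L}$.
   Context: Setting: adaptive seeding on a finite directed graph $\mathcal G=(\mathcal V,\mathcal E)$ with influence probabilities $\bar w(e)$, one seed per round, each round's diffusion following the independent cascade model on the current graph (where arcs into nodes that have acted as non-seed activated nodes, i.e. intermediaries, in earlier rounds have been removed; independent-cascade coin flips are independent across arcs and rounds). $p_{\max}=\max_{e\in\mathcal E}\bar w(e)$ and $d_{\max}$ is the maximum out-degree of a node in $\mathcal G$. A node is newly activated in round $t$ if it is activated in round $t$ and was not activated in any earlier round. *)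

(* Defs.v *)
From mathcomp Require Import all_boot.
From Stdlib Require Import Reals.
Set Implicit Arguments. Unset Strict Implicit. Unset Printing Implicit Defensive.

Open Scope R_scope.

(* p_max = maximum influence probability over arcs (0 if there are no arcs). *)
Definition pmax (V : finType) (E : rel V) (w : V -> V -> R) : R :=
  \big[Rmax/0%R]_(x : V * V | E x.1 x.2) w x.1 x.2.

Definition dmax (V : finType) (E : rel V) : nat :=
  (\max_(u : V) #|[set v | E u v]|)%N.

(* Current graph of a round: arcs into nodes of B (earlier intermediaries) removed. *)
Definition cur_graph (V : finType) (E : rel V) (B : {set V}) : rel V :=
  fun u v => E u v && (v \notin B).

(* Probability of a realization S of the independent-cascade coin flips
   (S = set of arcs whose coin flip succeeded) on graph E' with weights w. *)
Definition coin_weight (V : finType) (E' : rel V) (w : V -> V -> R)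
    (S : {set V * V}) : R :=
  \big[Rmult/1%R]_(x : V * V)
     (if E' x.1 x.2 then (if x \in S then w x.1 x.2 else 1 - w x.1 x.2)
      else (if x \in S then 0 else 1)).

Definition activated (V : finType) (S : {set V * V}) (s : V) : {set V} :=
  [set v | connect (fun a b => (a, b) \in S) s v].

(* Probability that, in a round whose current graph is cur_graph E B, with seed s
   and with the set A of nodes activated in earlier rounds, more than L nodes
   are newly activated. *)
Definition prob_new_exceeds (V : finType) (E : rel V) (w : V -> V -> R)
    (B A : {set V}) (s : V) (L : R) : R :=
  \big[Rplus/0%R]_(S : {set V * V} | (if Rlt_dec L (INR #|activated S s :\: A|) then true else false))
     coin_weight (cur_graph E B) w S.

(* Main.v *)
From HB Require Import structures.
Require Import Defs.
From mathcomp Require Import all_boot.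
From Stdlib Require Import Reals Lra.
Open Scope R_scope.
Set Implicit Arguments. Unset Strict Implicit. Unset Printing Implicit Defensive.

HB.instance Definition _ := Monoid.isComLaw.Build R 0 Rplus (fun a b c => esym (Rplus_assoc a b c)) Rplus_comm Rplus_0_l.
HB.instance Definition _ := Monoid.isComLaw.Build R 1 Rmult (fun a b c => esym (Rmult_assoc a b c)) Rmult_comm Rmult_1_l.
HB.instance Definition _ := Monoid.isMulLaw.Build R 0 Rmult Rmult_0_l Rmult_0_r.
HB.instance Definition _ := Monoid.isAddLaw.Build R Rmult Rplus Rmult_plus_distr_r Rmult_plus_distr_l.

Lemma prod_sum_set (X : finType) (g : X -> bool -> R) :
  \big[Rplus/0]_(S : {set X}) \big[Rmult/1]_(x : X) g x (x \in S) =
  \big[Rmult/1]_(x : X) (g x true + g x false).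
Proof.
transitivity (\big[Rmult/1]_(x : X) \big[Rplus/0]_(b : bool) g x b); last first.
  by apply: eq_bigr => x _; rewrite big_bool.
rewrite bigA_distr_bigA.
rewrite (reindex (fun f : {ffun X -> bool} => [set x | f x])).
  by apply: eq_bigr => f _; apply: eq_bigr => x _; rewrite inE.
exists (fun S : {set X} => [ffun x => x \in S]) => f _.
  by apply/ffunP => x; rewrite ffunE inE.
by apply/setP => x; rewrite inE ffunE.
Qed.

Definition Ez (V : finType) (G : rel V) (w : V -> V -> R) (H : {set V * V} -> R) : R :=
  \big[Rplus/0]_(S : {set V * V}) (coin_weight G w S * H S).

Definition upd (V : finType) (w : V -> V -> R) (a b : V) (r : R) : V -> V -> R :=
  fun x y => if (x == a) && (y == b) then r else w x y.

Definition wf (V : finType) (G : rel V) (w : V -> V -> R) :=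
  forall u v, G u v -> 0 <= w u v <= 1.

Lemma sum_le (I : finType) (P : pred I) (F1 F2 : I -> R) :
  (forall i, P i -> F1 i <= F2 i) ->
  \big[Rplus/0]_(i | P i) F1 i <= \big[Rplus/0]_(i | P i) F2 i.
Proof.
move=> H; apply: (big_ind2 (fun a b => a <= b)) => //; first lra.
by move=> a b c d; lra.
Qed.

Lemma prod_le (I : finType) (P : pred I) (F1 F2 : I -> R) :
  (forall i, P i -> 0 <= F1 i <= F2 i) ->
  \big[Rmult/1]_(i | P i) F1 i <= \big[Rmult/1]_(i | P i) F2 i.
Proof.
move=> H.
suff : 0 <= \big[Rmult/1]_(i | P i) F1 i <= \big[Rmult/1]_(i | P i) F2 i by case.
apply: (big_ind2 (fun a b => 0 <= a <= b)) => //; first lra.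
move=> a b c d [h1 h2] [h3 h4]; split; first by apply: Rmult_le_pos.
by apply: Rmult_le_compat.
Qed.

Lemma prod_const (I : finType) (P : pred I) (c : R) :
  \big[Rmult/1]_(i | P i) c = c ^ #|P|.
Proof.
rewrite big_const; elim: #|P| => //= n ->; done.
Qed.

Lemma coin_ge0 (V : finType) (G : rel V) w S : wf G w -> 0 <= coin_weight G w S.
Proof.
move=> hw; rewrite /coin_weight; apply: (big_ind (fun a => 0 <= a)); first lra.
  by move=> a b; apply: Rmult_le_pos.
move=> [a b] _ /=; case: ifP => hG; case: ifP => _; try lra;
  have := hw a b hG; lra.
Qed.

Lemma coin_sum (V : finType) (G : rel V) w :
  \big[Rplus/0]_(S : {set V * V}) coin_weight G w S = 1.
Proof.
rewrite /coin_weight.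
rewrite (prod_sum_set (fun x b => if G x.1 x.2 then (if b then w x.1 x.2 else 1 - w x.1 x.2)
      else (if b then 0 else 1))).
rewrite big1 // => x _; case: ifP => _; lra.
Qed.

Lemma coin_split (V : finType) (G : rel V) w a b S :
  coin_weight G w S = w a b * coin_weight G (upd w a b 1) S
     + (1 - w a b) * coin_weight G (upd w a b 0) S.
Proof.
have D w' : coin_weight G w' S =
    (if G a b then (if (a, b) \in S then w' a b else 1 - w' a b) else (if (a, b) \in S then 0 else 1)) *
    \big[Rmult/1]_(i | i != (a, b))
      (if G i.1 i.2 then if i \in S then w' i.1 i.2 else 1 - w' i.1 i.2
       else if i \in S then 0 else 1).
  by rewrite /coin_weight (bigD1 (a, b)).
rewrite !D.
have E r : \big[Rmult/1]_(i | i != (a, b))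
      (if G i.1 i.2 then if i \in S then upd w a b r i.1 i.2 else 1 - upd w a b r i.1 i.2
       else if i \in S then 0 else 1) =
    \big[Rmult/1]_(i | i != (a, b))
      (if G i.1 i.2 then if i \in S then w i.1 i.2 else 1 - w i.1 i.2
       else if i \in S then 0 else 1).
  apply: eq_bigr => [[x y]] /= hne; rewrite /upd.
  have -> : (x == a) && (y == b) = false.
    by apply/negbTE; apply: contra hne => /andP [/eqP -> /eqP ->].
  done.
rewrite !E /upd !eqxx /=.
case: (G a b); case: ((a, b) \in S); ring.
Qed.

Lemma Ez_split (V : finType) (G : rel V) w a b H :
  Ez G w H = w a b * Ez G (upd w a b 1) H + (1 - w a b) * Ez G (upd w a b 0) H.
Proof.
rewrite /Ez !big_distrr -big_split /=; apply: eq_bigr => S _.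
rewrite (coin_split G w a b S); ring.
Qed.

Lemma Ez_le (V : finType) (G : rel V) w H1 H2 : wf G w ->
  (forall S, coin_weight G w S <> 0 -> H1 S <= H2 S) -> Ez G w H1 <= Ez G w H2.
Proof.
move=> hw h; apply: sum_le => S _.
have := coin_ge0 S hw; case: (Req_dec (coin_weight G w S) 0) => [->|hn] h0.
  lra.
apply: Rmult_le_compat_l => //; exact: h.
Qed.

Lemma Ez_const (V : finType) (G : rel V) w c : Ez G w (fun _ => c) = c.
Proof. by rewrite /Ez -big_distrl /= coin_sum Rmult_1_l. Qed.

Lemma Ez_scale (V : finType) (G : rel V) w c H :
  Ez G w (fun S => c * H S) = c * Ez G w H.
Proof. rewrite /Ez big_distrr /=; apply: eq_bigr => S _; ring. Qed.

Lemma coin_nz (V : finType) (G : rel V) w S x : coin_weight G w S <> 0 ->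
  (if G x.1 x.2 then (if x \in S then w x.1 x.2 else 1 - w x.1 x.2)
      else (if x \in S then 0 else 1)) <> 0.
Proof.
move=> h h0; apply: h; rewrite /coin_weight (bigD1 x) //= h0; ring.
Qed.

Lemma coin_nz_arc (V : finType) (G : rel V) w S a b : coin_weight G w S <> 0 ->
  (a, b) \in S -> G a b.
Proof.
move=> /(@coin_nz _ _ _ _ (a, b)) /=; case: (G a b) => //.
by case: ((a, b) \in S) => // h _; case: h.
Qed.

Lemma coin_nz_one (V : finType) (G : rel V) w S a b : coin_weight G w S <> 0 ->
  G a b -> w a b = 1 -> (a, b) \in S.
Proof.
move=> /(@coin_nz _ _ _ _ (a, b)) /= h hG h1; move: h; rewrite hG h1.
case: ((a, b) \in S) => // h; exfalso; apply: h; ring.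
Qed.

Lemma coin_nz_zero (V : finType) (G : rel V) w S a b : coin_weight G w S <> 0 ->
  w a b = 0 -> (a, b) \notin S.
Proof.
move=> /(@coin_nz _ _ _ _ (a, b)) /= h h0; move: h; rewrite h0.
by case: (G a b); case: ((a, b) \in S) => // h; case: h.
Qed.
Definition step (V : finType) (U : {set V}) (S : {set V * V}) : rel V :=
  fun a b => [&& (a, b) \in S, a \notin U & b \notin U].

Definition reach (V : finType) (U : {set V}) (S : {set V * V}) (F : {set V}) : {set V} :=
  [set v | (v \notin U) && [exists u, [&& u \in F, u \notin U & connect (step U S) u v]]].

Definition Kset (V : finType) (U : {set V}) (S : {set V * V}) (f : V) : {set V} :=
  [set v | ((f, v) \in S) && (v \notin f |: U)].

Lemma path_closed (V : finType) (e : rel V) (X : {set V}) :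
  (forall a b, a \in X -> e a b -> b \in X) ->
  forall p x, path e x p -> x \in X -> last x p \in X.
Proof.
move=> h; elim=> //= y p IH x /andP [hxy hp] hx; exact: IH hp (h x y hx hxy).
Qed.

Lemma reach_sub (V : finType) (U : {set V}) S F f : f \notin U ->
  reach U S F \subset f |: reach (f |: U) S ((F :\ f) :|: Kset U S f).
Proof.
move=> hfU; apply/subsetP => v; rewrite inE => /andP [hvU /existsP [u /and3P [huF huU hc]]].
set X := f |: _.
have cl : forall a b, a \in X -> step U S a b -> b \in X.
  move=> a b hX /and3P [hab haU hbU].
  case: (eqVneq b f) => [->|hbf]; first by rewrite setU11.
  rewrite setU1r // inE !inE negb_or hbf hbU /=.
  case: (eqVneq a f) => [haf|haf].
    apply/existsP; exists b; rewrite connect0 !inE negb_or hbf hbU andbT /=.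
    by rewrite -haf hab orbT.
  move: hX; rewrite !inE (negbTE haf) /= => /andP [haU' /existsP [u0 /and3P [h1 h2 h3]]].
  apply/existsP; exists u0; rewrite h1 h2 /=.
  apply: connect_trans h3 (connect1 _).
  by rewrite /step hab !inE (negbTE hbf) (negbTE haf) /= haU hbU.
have hu : u \in X.
  rewrite /X; case: (eqVneq u f) => [->|huf]; first by rewrite setU11.
  apply/setU1P; right; rewrite inE !inE negb_or huf huU /=.
  by apply/existsP; exists u; rewrite connect0 !inE huf huF negb_or huf huU.
move/connectP: hc => [p hp ->]; exact: path_closed cl p u hp hu.
Qed.

Definition bnd (V : finType) (G : rel V) (U : {set V}) (w : V -> V -> R) (p : R) :=
  forall u v, G u v -> u \notin U -> w u v <= p.

Lemma prod_const_in (I : finType) (A : {pred I}) (c : R) :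
  \big[Rmult/1]_(i in A) c = c ^ #|A|.
Proof. rewrite big_const; elim: #|A| => //= n ->; done. Qed.

Lemma pow_leq (x : R) (m n : nat) : 1 <= x -> leq m n -> x ^ m <= x ^ n.
Proof. move=> hx /leP; exact: Rle_pow. Qed.

Lemma upd_ok (V : finType) (G : rel V) (U : {set V}) w p f t r :
  f \in U -> 0 <= r <= 1 -> wf G w -> bnd G U w p ->
  wf G (upd w f t r) /\ bnd G U (upd w f t r) p.
Proof.
move=> hf hr hw hb; split.
  by move=> u v huv; rewrite /upd; case: ifP => _ //; apply: hw.
move=> u v huv huU; rewrite /upd; case: ifP => [/andP [/eqP hu _]|_].
  by move: huU; rewrite hu hf.
exact: hb.
Qed.

Definition isone (r : R) : bool := if Req_EM_T r 1 then true else false.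
Lemma isoneP r : reflect (r = 1) (isone r).
Proof. by rewrite /isone; case: Req_EM_T => h; constructor. Qed.
Lemma isone1 : isone 1 = true.
Proof. by apply/isoneP. Qed.

Lemma inner (V : finType) (G : rel V) (p z dl : R) (U F : {set V}) (f : V) :
  1 <= z -> 0 <= dl -> f \notin U ->
  (forall F'' w, wf G w -> bnd G (f |: U) w p ->
     Ez G w (fun S => z ^ #|reach (f |: U) S F''|) <= (1 + dl) ^ #|F''|) ->
  forall (T : {set V}) w, wf G w -> bnd G (f |: U) w p ->
  (forall v, G f v -> v \notin f |: U -> v \notin T -> w f v = 0 \/ w f v = 1) ->
  Ez G w (fun S => z ^ #|reach U S F|) <=
  z * (1 + dl) ^ #|F :\ f| * \big[Rmult/1]_(v | G f v && (v \notin f |: U)) (1 + w f v * dl).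
Proof.
move=> hz hdl hfU IHm T; have [n] := ubnP #|T|; elim: n T => // n IH T hT w hw hb hdet.
case: (set_0Vmem T) => [T0 | [t ht]].
  subst T.
  have hdet' v : G f v -> v \notin f |: U -> w f v = 0 \/ w f v = 1.
    by move=> h1 h2; apply: hdet => //; rewrite inE.
  pose K0 := [set v | G f v && (v \notin f |: U) && (isone (w f v))].
  have hK : forall S, coin_weight G w S <> 0 -> Kset U S f = K0.
    move=> S hS; apply/setP => v; rewrite !inE.
    apply/idP/idP.
      move=> /andP [hfv hv]; have hG := coin_nz_arc hS hfv.
      have hv' : v \notin f |: U by rewrite !inE.
      rewrite hG hv /=.
      case: (hdet' v hG hv') => h; last by rewrite h isone1.
      by move: (coin_nz_zero hS h); rewrite hfv.
    move=> /andP [/andP [hG hv] /isoneP h1].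
    by rewrite (coin_nz_one hS hG h1) /= hv.
  have s1 : Ez G w (fun S => z ^ #|reach U S F|) <=
      Ez G w (fun S => z * z ^ #|reach (f |: U) S ((F :\ f) :|: K0)|).
    apply: (Ez_le hw); move=> S0 hS0; rewrite -(hK S0 hS0) tech_pow_Rmult.
    apply: pow_leq => //.
    apply: leq_trans (subset_leq_card (reach_sub S0 F hfU)) _.
    by rewrite cardsU1; case: (_ \notin _).
  apply: Rle_trans s1 _.
  rewrite Ez_scale.
  have hz0 : 0 <= z by lra.
  apply: Rle_trans (Rmult_le_compat_l _ _ _ hz0 (IHm _ w hw hb)) _.
  have -> : \big[Rmult/1]_(v | G f v && (v \notin f |: U)) (1 + w f v * dl) = (1 + dl) ^ #|K0|.
    rewrite (bigID (fun v => isone (w f v))) /=.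
    rewrite [X in _ * X]big1; last first.
      move=> v /andP [/andP [h1 h2] h3].
      by case: (hdet' v h1 h2) => h; [rewrite h; ring | move: h3; rewrite h isone1].
    rewrite Rmult_1_r -prod_const_in; apply: eq_big => [v | v].
      by rewrite /K0 inE.
    by move=> /andP [_ /isoneP ->]; ring.
  rewrite Rmult_assoc -pow_add; apply: Rmult_le_compat_l => //.
  apply: pow_leq; first lra.
  by rewrite cardsU leq_subr.
have hT' : leq (#|T :\ t|).+1 n.
  by move: hT; rewrite (cardsD1 t T) ht.
case hrel: (G f t && (t \notin f |: U)).
  have hff : f \in f |: U by rewrite setU11.
  move/andP: hrel => [hG ht'].
  have hwt := hw f t hG.
  have [hw1 hb1] := upd_ok t hff (conj Rle_0_1 (Rle_refl 1)) hw hb.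
  have [hw0 hb0] := upd_ok t hff (conj (Rle_refl 0) Rle_0_1) hw hb.
  have hdr r : r = 0 \/ r = 1 -> forall v, G f v -> v \notin f |: U -> v \notin T :\ t ->
      upd w f t r f v = 0 \/ upd w f t r f v = 1.
    move=> hr v h1 h2; rewrite /upd eqxx /=; case: eqP => [-> //|/eqP hvt] h3.
    by apply: hdet => //; move: h3; rewrite !inE hvt.
  have E1 := IH _ hT' _ hw1 hb1 (hdr 1 (or_intror erefl)).
  have E0 := IH _ hT' _ hw0 hb0 (hdr 0 (or_introl erefl)).
  have hrelt : G f t && (t \notin f |: U) by rewrite hG ht'.
  have Pd w' : \big[Rmult/1]_(v | G f v && (v \notin f |: U)) (1 + w' f v * dl) =
      (1 + w' f t * dl) * \big[Rmult/1]_(v | G f v && (v \notin f |: U) && (v != t)) (1 + w' f v * dl).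
    by rewrite (bigD1 t).
  have Rst r : \big[Rmult/1]_(v | G f v && (v \notin f |: U) && (v != t)) (1 + upd w f t r f v * dl)
      = \big[Rmult/1]_(v | G f v && (v \notin f |: U) && (v != t)) (1 + w f v * dl).
    apply: eq_bigr => v /andP [_ hvt]; rewrite /upd eqxx /= (negbTE hvt) //.
  move: E1 E0; rewrite !Pd !Rst /upd !eqxx /= => E1 E0.
  rewrite (Ez_split G w f t).
  set Rs := \big[Rmult/1]_(v | _) _ in E1 E0 *.
  set c := z * (1 + dl) ^ #|F :\ f| in E1 E0 *.
  apply: (@Rle_trans _ (w f t * (c * ((1 + 1 * dl) * Rs)) + (1 - w f t) * (c * ((1 + 0 * dl) * Rs)))).
    apply: Rplus_le_compat; apply: Rmult_le_compat_l => //; lra.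
  right; ring.
apply: IH hT' _ hw hb _ => v h1 h2 h3; apply: hdet => //.
case: (eqVneq v t) => [hvt|hvt]; first by move: hrel; rewrite -hvt h1 h2.
by move: h3; rewrite !inE hvt.
Qed.

Lemma main_bound (V : finType) (G : rel V) (p z dl : R) (d : nat) :
  1 <= z -> 0 <= dl -> 0 <= p -> z * (1 + p * dl) ^ d <= 1 + dl ->
  (forall u, leq #|[set v | G u v]| d) ->
  forall n (U : {set V}), leq (#|~: U|).+1 n -> forall F w, wf G w -> bnd G U w p ->
  Ez G w (fun S => z ^ #|reach U S F|) <= (1 + dl) ^ #|F|.
Proof.
move=> hz hdl hp hzd hdeg; elim=> // n IH U hU F w hw hb.
case: (pickP [pred f | (f \in F) && (f \notin U)]) => [f /andP [hfF hfU] | hnone].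
  have hU' : leq (#|~: (f |: U)|).+1 n.
    have hpr : ~: (f |: U) \proper ~: U.
      apply/properP; split; first by rewrite setCS subsetUr.
      by exists f; rewrite !inE ?eqxx // hfU.
    move: hU; rewrite ltnS => hU; exact: leq_trans (proper_card hpr) hU.
  have hb' : bnd G (f |: U) w p.
    move=> u v huv; rewrite !inE negb_or => /andP [_ h]; exact: hb.
  have hdet : forall v, G f v -> v \notin f |: U -> v \notin [set: V] -> w f v = 0 \/ w f v = 1.
    by move=> v _ _; rewrite in_setT.
  have := @inner _ G p z dl U F f hz hdl hfU (IH _ hU') [set: V] w hw hb' hdet.
  move=> h; apply: Rle_trans h _.
  have hprod : \big[Rmult/1]_(v | G f v && (v \notin f |: U)) (1 + w f v * dl) <= (1 + p * dl) ^ d.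
    apply: Rle_trans (_ : _ <= \big[Rmult/1]_(v | G f v && (v \notin f |: U)) (1 + p * dl)) _.
      apply: prod_le => v /andP [hG _]; have := hw f v hG; have := hb f v hG hfU.
      move=> h1 h2; split; [nra | nra].
    rewrite prod_const; apply: pow_leq; first nra.
    apply: leq_trans (hdeg f); apply: subset_leq_card; apply/subsetP => v.
    by rewrite !inE => /andP [].
  rewrite (cardsD1 f F) hfF add1n /=.
  have h0 : 0 <= (1 + dl) ^ #|F :\ f| by apply: pow_le; lra.
  have h1 : 0 <= z * (1 + dl) ^ #|F :\ f| by apply: Rmult_le_pos => //; lra.
  apply: Rle_trans (Rmult_le_compat_l _ _ _ h1 hprod) _.
  have -> : z * (1 + dl) ^ #|F :\ f| * (1 + p * dl) ^ d = (1 + dl) ^ #|F :\ f| * (z * (1 + p * dl) ^ d) by ring.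
  rewrite (Rmult_comm (1 + dl)); exact: Rmult_le_compat_l.
have E0 : forall S, reach U S F = set0.
  move=> S; apply/setP => v; rewrite !inE; apply/negbTE; apply/negP.
  move=> /andP [_ /existsP [u /and3P [h1 h2 _]]]; have := hnone u; by rewrite /= h1 h2.
have -> : Ez G w (fun S => z ^ #|reach U S F|) = Ez G w (fun _ => 1).
  by apply: eq_bigr => S _; rewrite E0 cards0.
rewrite Ez_const; apply: pow_R1_Rle; lra.
Qed.

Lemma Rmax_big_ub (I : eqType) (r : seq I) (P : pred I) (F : I -> R) x :
  x \in r -> P x -> F x <= \big[Rmax/0]_(i <- r | P i) F i.
Proof.
elim: r => // y r IH; rewrite inE big_cons => /orP [/eqP <- | hx] hP.
  by rewrite hP; apply: Rmax_l.
case: (P y); last exact: IH.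
exact: Rle_trans (IH hx hP) (Rmax_r _ _).
Qed.

Lemma Rmax_big_ge0 (I : eqType) (r : seq I) (P : pred I) (F : I -> R) :
  0 <= \big[Rmax/0]_(i <- r | P i) F i.
Proof.
elim: r => [|y r IH]; first by rewrite big_nil; lra.
rewrite big_cons; case: (P y) => //; exact: Rle_trans IH (Rmax_r _ _).
Qed.

Lemma bern (a : R) (d : nat) : 0 <= a -> (1 + a) ^ d * (1 - INR d * a) <= 1.
Proof.
move=> ha; elim: d => [|d IH]; first by simpl; lra.
rewrite S_INR /=.
have hX : 0 <= (1 + a) ^ d by apply: pow_le; lra.
have hn : 0 <= INR d by apply: pos_INR.
have -> : (1 + a) * (1 + a) ^ d * (1 - (INR d + 1) * a) =
   (1 + a) ^ d * (1 - INR d * a) - (1 + a) ^ d * (a * a * (INR d + 1)) by ring.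
have : 0 <= (1 + a) ^ d * (a * a * (INR d + 1)).
  apply: Rmult_le_pos => //; apply: Rmult_le_pos; [nra | lra].
lra.
Qed.

Lemma act_sub (V : finType) (S : {set V * V}) (s : V) :
  activated S s \subset reach set0 S [set s].
Proof.
apply/subsetP => v; rewrite !inE => hc; apply/existsP; exists s.
rewrite !inE eqxx /=.
suff <- : connect (fun a b => (a, b) \in S) =2 connect (step set0 S) by [].
by apply: eq_connect => a b; rewrite /step !inE andbT.
Qed.

Theorem lemma3 :
  forall (p_max : R) (d_max : nat), p_max * INR d_max < 1 ->
  exists Rc rho : R, 0 < Rc /\ 0 < rho /\
    forall (V : finType) (E : rel V) (w : V -> V -> R),
      (forall u v, E u v -> 0 <= w u v <= 1) ->
      pmax E w = p_max -> dmax E = d_max ->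
      forall (B A : {set V}) (s : V) (L : R), 0 < L ->
        prob_new_exceeds E w B A s L <= Rc * exp (- rho * L).
Proof.
move=> p_max d_max hq.
pose P := Rmax 0 p_max.
have hP0 : 0 <= P by apply: Rmax_l.
have hn0 : 0 <= INR d_max by apply: pos_INR.
have hq1 : P * INR d_max < 1.
  rewrite /P; case: (Rle_dec 0 p_max) => h.
    by rewrite Rmax_right.
  rewrite Rmax_left; lra.
pose q := P * INR d_max.
have hq0 : 0 <= q by apply: Rmult_le_pos.
pose dl := (1 - q) / 2.
have hdl : 0 < dl by rewrite /dl; fold q in hq1; lra.
pose z := (1 + dl) * (1 - q * dl).
have hz : 1 < z.
  have -> : z = 1 + dl * ((1 - q) * (1 - q / 2)) by rewrite /z /dl; field.
  fold q in hq1.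
  have : 0 < dl * ((1 - q) * (1 - q / 2)).
    apply: Rmult_lt_0_compat => //; apply: Rmult_lt_0_compat; lra.
  lra.
exists (1 + dl), (ln z); split; first lra.
split; first by rewrite -ln_1; apply: ln_increasing; lra.
move=> V E w hw hpm hdm B A s L hL.
pose G := cur_graph E B.
have hwG : wf G w by move=> u v /andP [h _]; exact: hw.
have hbG : bnd G set0 w P.
  move=> u v /andP [h _] _; apply: Rle_trans (_ : w u v <= p_max) (Rmax_r _ _).
  rewrite -hpm; exact: (@Rmax_big_ub _ _ (fun x : V * V => E x.1 x.2) (fun x => w x.1 x.2) (u, v) (mem_index_enum _) h).
have hdeg : forall u, leq #|[set v | G u v]| d_max.
  move=> u; rewrite -hdm; apply: leq_trans (_ : leq _ #|[set v | E u v]|) _.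
    apply: subset_leq_card; apply/subsetP => v; rewrite !inE => /andP [] //.
  exact: (@leq_bigmax _ (fun u => #|[set v | E u v]|) u).
have hzd : z * (1 + P * dl) ^ d_max <= 1 + dl.
  have hb := bern d_max (Rmult_le_pos _ _ hP0 (Rlt_le _ _ hdl)).
  have -> : z * (1 + P * dl) ^ d_max = (1 + dl) * ((1 + P * dl) ^ d_max * (1 - INR d_max * (P * dl))).
    rewrite /z /q; ring.
  have : 0 <= 1 + dl by lra.
  move=> h; rewrite -{2}(Rmult_1_r (1 + dl)); exact: Rmult_le_compat_l.
have M := @main_bound V G P z dl d_max (Rlt_le _ _ hz) (Rlt_le _ _ hdl) hP0 hzd hdeg
   (#|~: (set0 : {set V})|).+1 set0 (leqnn _) [set s] w hwG hbG.
rewrite cards1 /= Rmult_1_r in M.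
pose e := exp (- ln z * L).
have he : 0 < e by apply: exp_pos.
rewrite /prob_new_exceeds -/G.
apply: Rle_trans (_ : _ <= Ez G w (fun S => e * z ^ #|reach set0 S [set s]|)) _.
  rewrite big_mkcond; apply: sum_le => S _.
  have hm := coin_ge0 S hwG.
  case: (Rlt_dec L (INR #|activated S s :\: A|)) => hc /=; last first.
    apply: Rmult_le_pos => //; apply: Rmult_le_pos; [lra | apply: pow_le; lra].
  rewrite -{1}(Rmult_1_r (coin_weight G w S)); apply: Rmult_le_compat_l => //.
  set m := #|reach set0 S [set s]|.
  have hkm : leq #|activated S s :\: A| m.
    apply: leq_trans (subset_leq_card (subsetDl _ _)) (subset_leq_card (act_sub S s)).
  have hmL : L <= INR m.
    apply: Rlt_le; apply: Rlt_le_trans hc _; apply: le_INR; exact/leP.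
  rewrite -Rpower_pow; last lra.
  rewrite /e /Rpower -exp_plus.
  have hl : 0 < ln z by rewrite -ln_1; apply: ln_increasing; lra.
  have hx : 0 <= - ln z * L + INR m * ln z.
    have -> : - ln z * L + INR m * ln z = ln z * (INR m - L) by ring.
    apply: Rmult_le_pos; lra.
  have := exp_ineq1_le (- ln z * L + INR m * ln z); lra.
rewrite Ez_scale; rewrite Rmult_comm; apply: Rmult_le_compat_r; lra.
Qed.
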